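(* Let $m\geq 3$. The matching $\mu$ on the face poset of $\Delta_m^{3,2}$ has at least $(m-2)^3$ critical cells of dimension $3$.
   Context: $\Delta_m^{3,2}=\mathrm{VR}(\{0,\ldots,m\}^3;2)$, where $\{0,\ldots,m\}^3$ carries the Manhattan metric $d(x,y)=\sum_i|x_i-y_i|$ and $\mathrm{VR}(X;r)$ is the complex of finite subsets of diameter $\leq r$. Order the vertices as $v_1\prec\cdots\prec v_N$ ($N=(m+1)^3$) in the anti-lexicographic order ($x\prec y$ iff at the largest index $i$ with $x_i\neq y_i$, $x_i<y_i$). Let $T_0$ be the set of all simplices, including the empty simplex. For $i=1,\ldots,N$ put $S_i=\{\sigma\in T_{i-1}: v_i\notin\sigma,\ \sigma\cup\{v_i\}\in T_{i-1}\}$, $\mu(\sigma)=\sigma\cup\{v_i\}$ for $\sigma\in S_i$, and $T_i=T_{i-1}\setminus(S_i\cup\{\sigma\cup\{v_i\}:\sigma\in S_i\})$. The critical cells of $\mu$ are the simplices in $T_N$; the dimension of a simplex is its cardinality minus one. *)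

(* Defs.v *)
From mathcomp Require Import all_boot.
Set Implicit Arguments. Unset Strict Implicit. Unset Printing Implicit Defensive.

Definition gridV (m : nat) : finType := ('I_m.+1 * 'I_m.+1 * 'I_m.+1)%type.

Definition c1 m (x : gridV m) : nat := x.1.1.
Definition c2 m (x : gridV m) : nat := x.1.2.
Definition c3 m (x : gridV m) : nat := x.2.

Definition absdiff (a b : nat) : nat := (a - b) + (b - a).

Definition manh m (x y : gridV m) : nat :=
  absdiff (c1 x) (c1 y) + absdiff (c2 x) (c2 y) + absdiff (c3 x) (c3 y).

(* Simplices of VR({0..m}^3; 2): finite subsets of diameter <= 2
   (the empty simplex included). *)
Definition is_simplex m (s : {set gridV m}) : bool :=
  [forall x in s, forall y in s, manh x y <= 2].

Definition T0 m : {set {set gridV m}} := [set s | is_simplex s].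

Definition antilex_lt m (x y : gridV m) : bool :=
  (c3 x < c3 y) || ((c3 x == c3 y) &&
  ((c2 x < c2 y) || ((c2 x == c2 y) && (c1 x < c1 y)))).

Definition vertex_order m : seq (gridV m) :=
  flatten [seq flatten [seq [seq ((i1, i2), i3) : gridV m | i1 <- enum 'I_m.+1]
                          | i2 <- enum 'I_m.+1]
          | i3 <- enum 'I_m.+1].

(* One step of the matching: given T_{i-1} and v = v_i, produce T_i. *)
Definition match_set m (v : gridV m) (T : {set {set gridV m}}) : {set {set gridV m}} :=
  [set s in T | (v \notin s) && (s :|: [set v] \in T)].

Definition step m (T : {set {set gridV m}}) (v : gridV m) : {set {set gridV m}} :=
  let S := match_set v T in
  T :\: (S :|: [set s :|: [set v] | s in S]).

Definition critical_cells m : {set {set gridV m}} :=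
  foldl (@step m) (T0 m) (vertex_order m).

(* Dimension of a simplex = cardinality - 1, so dimension 3 <-> 4 vertices. *)
Definition critical_cells_dim m (d : nat) : {set {set gridV m}} :=
  [set s in critical_cells m | #|s| == d.+1].

(* Main.v *)
Require Import Defs.
From mathcomp Require Import all_boot.
From mathcomp Require Import zify.

Set Implicit Arguments. Unset Strict Implicit. Unset Printing Implicit Defensive.


Lemma pairwise_flatten_map (A B : eqType) (r : rel B) (R : rel A) (F : A -> seq B) (s : seq A) :
  pairwise R s -> (forall i, pairwise r (F i)) ->
  (forall i j, R i j -> forall x y, x \in F i -> y \in F j -> r x y) ->
  pairwise r (flatten (map F s)).
Proof.
move=> + HF HR; elim: s => [|i s IH] //=.
move=> /andP [Hi Hs]; rewrite (pairwise_cat r).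
rewrite (HF i) (IH Hs) !andbT.
apply/allrelP => x y xi /flattenP [l /mapP [j js ->] yj].
exact: HR (allP Hi j js) x y xi yj.
Qed.

Lemma pairwise_enum n : pairwise (fun i j : 'I_n => i < j) (enum 'I_n).
Proof.
have := iota_ltn_sorted 0 n; rewrite -val_enum_ord.
rewrite sorted_pairwise; last exact: ltn_trans.
by rewrite pairwise_map.
Qed.

Section Gen.
Variable m : nat.
Local Notation vo := (vertex_order m).

Definition Tk k := foldl (@step m) (T0 m) (take k vo).

Lemma stepP (T : {set {set gridV m}}) v r :
  (r \in step T v) = [&& r \in T, ~~ ((v \notin r) && (r :|: [set v] \in T))
                      & ~~ ((v \in r) && (r :\ v \in T))].
Proof.
rewrite /step in_setD in_setU /match_set inE.
case rT: (r \in T); last by rewrite !andbF.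
rewrite /= andbT.
have -> : (r \in [set s :|: [set v] | s in [set s in T | (v \notin s) && (s :|: [set v] \in T)]])
   = (v \in r) && (r :\ v \in T).
  apply/imsetP/andP.
  - case=> s0; rewrite inE => /and3P [s0T vs0 s0vT] ->.
    split; first by rewrite !inE eqxx orbT.
    by rewrite setUC setU1K.
  - case=> vr rvT; exists (r :\ v); last by rewrite setUC setD1K.
    by rewrite inE rvT !inE eqxx /= setUC setD1K.
by rewrite negb_or.
Qed.

Lemma Tk_succ x0 k : k < size vo -> Tk k.+1 = step (Tk k) (nth x0 vo k).
Proof. by move=> h; rewrite /Tk (take_nth x0 h) foldl_rcons. Qed.

Lemma Tk_large k : size vo <= k -> Tk k = critical_cells m.
Proof. by move=> h; rewrite /Tk take_oversize. Qed.

Lemma Tk0 : Tk 0 = T0 m.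
Proof. by rewrite /Tk take0. Qed.

Lemma Tk_mono i j : i <= j -> Tk j \subset Tk i.
Proof.
elim: j => [|j IH] hij.
  by move: hij; rewrite leqn0 => /eqP ->.
case: (ltngtP i j.+1) hij => // [hlt _ | -> _]; last exact: subxx.
apply: subset_trans (IH hlt).
case: (ltnP j (size vo)) => hj.
  rewrite (Tk_succ (((ord0, ord0), ord0) : gridV m) hj).
  exact: subsetDl.
by rewrite !Tk_large // ltnW.
Qed.


Lemma Tk_T0 k : Tk k \subset T0 m.
Proof. by rewrite -Tk0; apply: Tk_mono. Qed.

Lemma survive (x0 : gridV m) (r : {set gridV m}) n : r \in T0 m -> n <= size vo ->
  (forall k, k < n ->
     (nth x0 vo k \notin r -> r :|: [set nth x0 vo k] \notin T0 m) /\
     (nth x0 vo k \in r -> r :\ nth x0 vo k \notin Tk k)) ->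
  r \in Tk n.
Proof.
move=> r0; elim: n => [|n IH] hn H; first by rewrite Tk0.
have rn : r \in Tk n by apply: IH => [|k hk]; [exact: ltnW | apply: H; exact: ltnW].
rewrite (Tk_succ x0 hn) stepP rn /=.
have [H1 H2] := H n (ltnSn n).
apply/andP; split.
  apply/negP => /andP [nu ru]; move: (H1 nu); rewrite (subsetP (Tk_T0 n) _ ru) //.
apply/negP => /andP [nu ru]; move: (H2 nu); rewrite ru //.
Qed.

Lemma kill (x0 : gridV m) (t : {set gridV m}) w j : w \notin t -> w \in vo -> t :|: [set w] \in T0 m ->
  (forall k, k < index w vo ->
     nth x0 vo k \notin t :|: [set w] /\ t :|: [set w] :|: [set nth x0 vo k] \notin T0 m) ->
  index w vo < j -> t \notin Tk j.
Proof.
move=> wt wvo r0 H hj.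
have iw : index w vo < size vo by rewrite index_mem.
have rw : t :|: [set w] \in Tk (index w vo).
  apply: (@survive x0 (t :|: [set w]) (index w vo) r0 (ltnW iw)).
  move=> k hk; have [H1 H2] := H k hk; split => // h; by rewrite h in H1.
apply/negP => tj.
have : t \in Tk (index w vo).+1 by apply: (subsetP (Tk_mono hj)).
rewrite (Tk_succ x0 iw) nth_index // stepP wt rw /=.
by rewrite andbF.
Qed.


Lemma coord_ext (x y : gridV m) : c1 x = c1 y -> c2 x = c2 y -> c3 x = c3 y -> x = y.
Proof.
case: x => [[x1 x2] x3]; case: y => [[y1 y2] y3]; rewrite /c1 /c2 /c3 /=.
by move=> /val_inj -> /val_inj -> /val_inj ->.
Qed.

Lemma eq_coord (x y : gridV m) : (x == y) = [&& c1 x == c1 y, c2 x == c2 y & c3 x == c3 y].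
Proof.
apply/eqP/and3P => [-> //| [/eqP h1 /eqP h2 /eqP h3]]; exact: coord_ext.
Qed.

Lemma c_le (x : gridV m) : [/\ c1 x <= m, c2 x <= m & c3 x <= m].
Proof.
case: x => [[x1 x2] x3]; rewrite /c1 /c2 /c3 /=.
by split; rewrite -ltnS ltn_ord.
Qed.

Lemma vo_all x : x \in vo.
Proof.
case: x => [[x1 x2] x3].
apply/flattenP; exists (flatten [seq [seq ((i1, i2), x3) : gridV m | i1 <- enum 'I_m.+1]
                          | i2 <- enum 'I_m.+1]).
  by apply/mapP; exists x3; rewrite ?mem_enum.
apply/flattenP; exists [seq ((i1, x2), x3) : gridV m | i1 <- enum 'I_m.+1].
  by apply/mapP; exists x2; rewrite ?mem_enum.
by apply/mapP; exists x1; rewrite ?mem_enum.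
Qed.

Lemma antilex_irr : irreflexive (@antilex_lt m).
Proof. by move=> x; rewrite /antilex_lt !ltnn !eqxx. Qed.

Lemma vo_pairwise : pairwise (@antilex_lt m) vo.
Proof.
apply: (pairwise_flatten_map (pairwise_enum _)).
- move=> i3; apply: (pairwise_flatten_map (pairwise_enum _)).
  + move=> i2; rewrite pairwise_map.
    apply: sub_pairwise (pairwise_enum _) => i j /= h.
    by rewrite /antilex_lt /c1 /c2 /c3 /= h !eqxx ltnn orbT.
  + move=> i j h x y /mapP [i1 _ ->] /mapP [j1 _ ->].
    by rewrite /antilex_lt /c1 /c2 /c3 /= h !eqxx ltnn orbT.
- move=> i j h x y /flattenP [l1 /mapP [i2 _ ->] /mapP [i1 _ ->]]
                 /flattenP [l2 /mapP [j2 _ ->] /mapP [j1 _ ->]].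
  by rewrite /antilex_lt /c1 /c2 /c3 /= h.
Qed.

Lemma vo_uniq : uniq vo.
Proof. exact: pairwise_uniq antilex_irr vo_pairwise. Qed.

Lemma antilex_total (x y : gridV m) : ~~ antilex_lt x y -> ~~ antilex_lt y x -> x = y.
Proof.
rewrite /antilex_lt => h1 h2; apply: coord_ext; lia.
Qed.

Lemma vo_index (x y : gridV m) : antilex_lt x y -> index x vo < index y vo.
Proof.
move=> hxy; rewrite ltnNge; apply/negP => hle.
have x0 := x.
have ix : index x vo < size vo by rewrite index_mem vo_all.
have iy : index y vo < size vo by rewrite index_mem vo_all.
case: (ltngtP (index y vo) (index x vo)) hle => // [hlt _ | heq _].
  have := (pairwiseP x vo_pairwise) _ _ iy ix hlt.
  rewrite !nth_index ?vo_all // => hyx.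
  move: hxy hyx; rewrite /antilex_lt; lia.
have : nth x vo (index y vo) = nth x vo (index x vo) by rewrite heq.
rewrite !nth_index ?vo_all // => exy; by rewrite exy antilex_irr in hxy.
Qed.

Lemma vo_before (x0 w : gridV m) k : k < index w vo -> antilex_lt (nth x0 vo k) w.
Proof.
move=> hk.
have iw : index w vo < size vo by rewrite index_mem vo_all.
have ks : k < size vo by apply: ltn_trans iw.
case h1: (antilex_lt (nth x0 vo k) w) => //.
case h2: (antilex_lt w (nth x0 vo k)).
  have := vo_index h2; rewrite index_uniq ?vo_uniq //; lia.
have e := antilex_total (negbT h1) (negbT h2).
by move: hk; rewrite -e index_uniq ?vo_uniq // ltnn.
Qed.

End Gen.

Definition pt m a b c : gridV m := ((inord a, inord b), inord c).

Lemma simplex_mem m (s : {set gridV m}) x y : s \in T0 m -> x \in s -> y \in s -> manh x y <= 2.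
Proof. by rewrite inE => /forallP /(_ x) /implyP H /H /forallP /(_ y) /implyP. Qed.

Definition L2 (x1 x2 x3 y1 y2 y3 : nat) :=
  x1+x2+x3 <= y1+y2+y3+2 /\ x1+x2+y3 <= y1+y2+x3+2 /\ x1+y2+x3 <= y1+x2+y3+2 /\
  x1+y2+y3 <= y1+x2+x3+2 /\ y1+x2+x3 <= x1+y2+y3+2 /\ y1+x2+y3 <= x1+y2+x3+2 /\
  y1+y2+x3 <= x1+x2+y3+2 /\ y1+y2+y3 <= x1+x2+x3+2.

Lemma manh_L2 m (x y : gridV m) :
  (manh x y <= 2) <-> L2 (c1 x) (c2 x) (c3 x) (c1 y) (c2 y) (c3 y).
Proof. rewrite /manh /absdiff /L2; lia. Qed.

Section Geom.
Variables m a b c : nat.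
Hypotheses (ha : a < m) (hb : b < m) (hc : 0 < c) (hc' : c <= m).

Lemma c_pt p q r : p <= m -> q <= m -> r <= m ->
  [/\ c1 (pt m p q r) = p, c2 (pt m p q r) = q & c3 (pt m p q r) = r].
Proof. by move=> hp hq hr; rewrite /c1 /c2 /c3 /= !inordK. Qed.

Lemma eq_pt (x : gridV m) p q r : p <= m -> q <= m -> r <= m ->
  (x == pt m p q r) = [&& c1 x == p, c2 x == q & c3 x == r].
Proof. by move=> hp hq hr; rewrite eq_coord; have [-> -> ->] := c_pt hp hq hr. Qed.

Definition sq : {set gridV m} :=
  pt m a b c |: (pt m a.+1 b c |: (pt m a b.+1 c |: [set pt m a.+1 b.+1 c])).

Lemma in_sq x : (x \in sq) =
  [|| [&& c1 x == a, c2 x == b & c3 x == c], [&& c1 x == a.+1, c2 x == b & c3 x == c],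
      [&& c1 x == a, c2 x == b.+1 & c3 x == c] | [&& c1 x == a.+1, c2 x == b.+1 & c3 x == c]].
Proof.
by rewrite !in_setU !in_set1 !eq_pt // ltnW.
Qed.

Lemma manh_pt (u : gridV m) p q r : p <= m -> q <= m -> r <= m ->
  manh u (pt m p q r) = absdiff (c1 u) p + absdiff (c2 u) q + absdiff (c3 u) r.
Proof. by move=> hp hq hr; rewrite /manh; have [-> -> ->] := c_pt hp hq hr. Qed.

Lemma sq_T0 : sq \in T0 m.
Proof.
rewrite inE; apply/forallP => x; apply/implyP; rewrite in_sq => hx.
apply/forallP => y; apply/implyP; rewrite in_sq => hy.
rewrite /manh /absdiff; lia.
Qed.

Lemma c_all (u : gridV m) : c1 u <= m /\ c2 u <= m /\ c3 u <= m.
Proof. by have [? ? ?] := c_le u. Qed.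

Lemma sq_max u : u \notin sq -> sq :|: [set u] \notin T0 m.
Proof.
move=> hu; apply/negP => H.
have h p : p \in sq -> manh u p <= 2.
  by move=> hp; apply: (simplex_mem H); [rewrite in_setU in_set1 eqxx orbT | rewrite in_setU hp].
have h1 := h _ (setU11 _ _).
have h2 : manh u (pt m a.+1 b c) <= 2 by apply: h; rewrite !in_setU !in_set1 eqxx !orbT.
have h3 : manh u (pt m a b.+1 c) <= 2 by apply: h; rewrite !in_setU !in_set1 eqxx !orbT.
have h4 : manh u (pt m a.+1 b.+1 c) <= 2 by apply: h; rewrite !in_setU !in_set1 eqxx !orbT.
move: h1 h2 h3 h4 hu; rewrite !manh_pt ?(ltnW ha) ?(ltnW hb) // in_sq /absdiff.
lia.
Qed.

Lemma c1_pt p q r : p <= m -> c1 (pt m p q r) = p.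
Proof. by move=> h; rewrite /c1 /= inordK. Qed.
Lemma c2_pt p q r : q <= m -> c2 (pt m p q r) = q.
Proof. by move=> h; rewrite /c2 /= inordK. Qed.
Lemma c3_pt p q r : r <= m -> c3 (pt m p q r) = r.
Proof. by move=> h; rewrite /c3 /= inordK. Qed.

Lemma P1_in : pt m a b c \in sq. Proof. by rewrite !in_setU !in_set1 eqxx ?orbT. Qed.
Lemma P2_in : pt m a.+1 b c \in sq. Proof. by rewrite !in_setU !in_set1 eqxx ?orbT. Qed.
Lemma P3_in : pt m a b.+1 c \in sq. Proof. by rewrite !in_setU !in_set1 eqxx ?orbT. Qed.
Lemma P4_in : pt m a.+1 b.+1 c \in sq. Proof. by rewrite !in_setU !in_set1 eqxx ?orbT. Qed.

Lemma sq_card : #|sq| = 4.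
Proof.
have n1 : pt m a b c \notin (pt m a.+1 b c |: (pt m a b.+1 c |: [set pt m a.+1 b.+1 c])).
  rewrite !in_setU !in_set1 !eq_coord ?c1_pt ?c2_pt ?c3_pt; lia.
have n2 : pt m a.+1 b c \notin (pt m a b.+1 c |: [set pt m a.+1 b.+1 c]).
  rewrite !in_setU !in_set1 !eq_coord ?c1_pt ?c2_pt ?c3_pt; lia.
have n3 : pt m a b.+1 c \notin [set pt m a.+1 b.+1 c].
  rewrite !in_set1 !eq_coord ?c1_pt ?c2_pt ?c3_pt; lia.
by rewrite /sq !cardsU1 n1 n2 n3 cards1.
Qed.

Definition wv (v : gridV m) := pt m (a + a + 1 - c1 v) (b + b + 1 - c2 v) c.-1.
Definition rho (v : gridV m) : {set gridV m} := sq :\ v :|: [set wv v].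

Lemma wv_c v : v \in sq ->
  [/\ c1 (wv v) = a + a + 1 - c1 v, c2 (wv v) = b + b + 1 - c2 v & c3 (wv v) = c.-1].
Proof. rewrite in_sq => hv; apply: c_pt; lia. Qed.

Lemma in_rho v x : (x \in rho v) =
  ((x \in sq) && ~~ [&& c1 x == c1 v, c2 x == c2 v & c3 x == c3 v]) ||
  [&& c1 x == c1 (wv v), c2 x == c2 (wv v) & c3 x == c3 (wv v)].
Proof. by rewrite /rho in_setU in_setD1 in_set1 !eq_coord andbC. Qed.

Lemma rho_T0 v : v \in sq -> rho v \in T0 m.
Proof.
move=> hv; have [e1 e2 e3] := wv_c hv.
move: hv; rewrite in_sq => hv.
rewrite inE; apply/forallP => x; apply/implyP; rewrite in_rho in_sq e1 e2 e3 => hx.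
apply/forallP => y; apply/implyP; rewrite in_rho in_sq e1 e2 e3 => hy.
apply/manh_L2.
case/or4P: hv => /and3P [/eqP V1 /eqP V2 /eqP V3]; rewrite V1 V2 V3 in hx hy.
all: case/orP: hx => [/andP [hx nx] | /and3P [/eqP -> /eqP -> /eqP ->]];
  [ move: nx; case/or4P: hx => /and3P [/eqP -> /eqP -> /eqP ->] | ].
all: case/orP: hy => [/andP [hy ny] | /and3P [/eqP -> /eqP -> /eqP ->]];
  [ move: ny; case/or4P: hy => /and3P [/eqP -> /eqP -> /eqP ->] | ].
all: rewrite /L2; intros; lia.
Qed.

Lemma wv_notin v : v \in sq -> wv v \notin sq :\ v.
Proof.
move=> hv; have [e1 e2 e3] := wv_c hv.
rewrite in_setD1 in_sq e1 e2 e3; lia.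
Qed.

Lemma wv_lt v : v \in sq -> antilex_lt (wv v) v.
Proof.
move=> hv; have [e1 e2 e3] := wv_c hv.
move: hv; rewrite in_sq /antilex_lt e1 e2 e3; lia.
Qed.

Lemma L2_pt u p q r : p <= m -> q <= m -> r <= m -> manh u (pt m p q r) <= 2 ->
  L2 (c1 u) (c2 u) (c3 u) p q r.
Proof. by move=> hp hq hr /manh_L2; rewrite c1_pt ?c2_pt ?c3_pt. Qed.

Lemma kill_geom v u : v \in sq -> antilex_lt u (wv v) ->
  (forall p, p \in rho v -> manh u p <= 2) -> False.
Proof.
move=> hv hlt h.
have hw : manh u (wv v) <= 2 by apply: h; rewrite /rho in_setU in_set1 eqxx orbT.
have h1 : ~~ (pt m a b c == v) -> manh u (pt m a b c) <= 2.
  by move=> ne; apply: h; rewrite /rho in_setU in_setD1 ne P1_in.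
have h2 : ~~ (pt m a.+1 b c == v) -> manh u (pt m a.+1 b c) <= 2.
  by move=> ne; apply: h; rewrite /rho in_setU in_setD1 ne P2_in.
have h3 : ~~ (pt m a b.+1 c == v) -> manh u (pt m a b.+1 c) <= 2.
  by move=> ne; apply: h; rewrite /rho in_setU in_setD1 ne P3_in.
have h4 : ~~ (pt m a.+1 b.+1 c == v) -> manh u (pt m a.+1 b.+1 c) <= 2.
  by move=> ne; apply: h; rewrite /rho in_setU in_setD1 ne P4_in.
have [e1 e2 e3] := wv_c hv.
move/manh_L2: hw; rewrite /L2 e1 e2 e3 => hw.
move: hv; rewrite in_sq => hv.
move: hlt; rewrite /antilex_lt e1 e2 e3 => hlt.
have E p q r : p <= m -> q <= m -> r <= m -> (pt m p q r == v) = [&& p == c1 v, q == c2 v & r == c3 v].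
  by move=> hp hq hr; rewrite eq_coord c1_pt ?c2_pt ?c3_pt // !(eq_sym p) !(eq_sym q) !(eq_sym r).
have g1 := (fun ne => L2_pt (ltnW ha) (ltnW hb) hc' (h1 ne)).
have g2 := (fun ne => L2_pt ha (ltnW hb) hc' (h2 ne)).
have g3 := (fun ne => L2_pt (ltnW ha) hb hc' (h3 ne)).
have g4 := (fun ne => L2_pt ha hb hc' (h4 ne)).
move: g1 g2 g3 g4; rewrite !E ?(ltnW ha) ?(ltnW hb) //.
clear h1 h2 h3 h4 h E.
rewrite /L2 in hw *; lia.
Qed.

Lemma crit_sq : sq \in critical_cells m.
Proof.
pose x0 : gridV m := ((ord0, ord0), ord0).
rewrite -(@Tk_large m _ (leqnn (size (vertex_order m)))).
apply: (@survive m x0 sq (size (vertex_order m)) sq_T0 (leqnn _)) => k hk.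
split; first exact: sq_max.
move=> hu.
have hk' : index (nth x0 (vertex_order m) k) (vertex_order m) = k by rewrite index_uniq // vo_uniq.
have r0 := rho_T0 hu.
apply: (@kill m x0 (sq :\ nth x0 (vertex_order m) k) (wv (nth x0 (vertex_order m) k)) k (wv_notin hu) (vo_all _) r0).
- move=> k' hk'2.
  have hlt := vo_before x0 hk'2.
  split.
  + apply/negP => hin; apply: (kill_geom hu hlt) => p hp.
    exact: (simplex_mem r0 hin hp).
  + apply/negP => H; apply: (kill_geom hu hlt) => p hp.
    by apply: (simplex_mem H); [rewrite in_setU in_set1 eqxx orbT | rewrite in_setU hp].
- by rewrite -{2}hk'; exact: vo_index (wv_lt hu).
Qed.

End Geom.


Theorem lemma4p11 (m : nat) : 3 <= m ->
  (m - 2) ^ 3 <= #|critical_cells_dim m 3|.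
Proof.
move=> hm.
pose f (t : 'I_(m-2) * 'I_(m-2) * 'I_(m-2)) : {set gridV m} := sq m t.1.1 t.1.2 (t.2).+1.
have finj : injective f.
  move=> [[i1 i2] i3] [[j1 j2] j3]; rewrite /f /= => E.
  have bi1 := ltn_ord i1; have bi2 := ltn_ord i2; have bi3 := ltn_ord i3.
  have bj1 := ltn_ord j1; have bj2 := ltn_ord j2; have bj3 := ltn_ord j3.
  have A : pt m i1 i2 i3.+1 \in sq m j1 j2 j3.+1 by rewrite -E P1_in.
  have B : pt m j1 j2 j3.+1 \in sq m i1 i2 i3.+1 by rewrite E P1_in.
  move: A B; rewrite !in_sq; try lia.
  rewrite ?c1_pt ?c2_pt ?c3_pt; try lia.
  move=> A B.
  have e1 : i1 = j1 :> nat by lia.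
  have e2 : i2 = j2 :> nat by lia.
  have e3 : i3 = j3 :> nat by lia.
  by rewrite (val_inj e1) (val_inj e2) (val_inj e3).
have sub : f @: setT \subset critical_cells_dim m 3.
  apply/subsetP => X /imsetP [[[i1 i2] i3] _ ->].
  have bi1 := ltn_ord i1; have bi2 := ltn_ord i2; have bi3 := ltn_ord i3.
  rewrite inE /f /= crit_sq ?sq_card //; lia.
rewrite (leq_trans _ (subset_leq_card sub)) // card_imset // cardsT !card_prod card_ord.
by rewrite !expnS expn0 muln1 mulnA.
Qed.
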